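(* Let $C$, $\mathbb{P}^3_{\omega+}$ and $W'=Sec(C)\cap\mathbb{P}^3_{\omega+}$ be as below. For each partition $\{w_1,\dots,w_6\}=\{w_i,w_j,w_k\}\sqcup\{w_l,w_m,w_n\}$ of the Weierstrass points into two triples, let $\mathbb{P}^2_{ijk}$ (resp. $\mathbb{P}^2_{lmn}$) be the plane of $\mathbb{P}^3_{\omega+}$ spanned by $w_i,w_j,w_k$ (resp. $w_l,w_m,w_n$) and $\mathbb{P}^1_{ijk}=\mathbb{P}^2_{ijk}\cap\mathbb{P}^2_{lmn}$. Then each of these $10$ lines $\mathbb{P}^1_{ijk}$ is contained in $W'$.
   Context: $C$ is a smooth complex projective genus 2 curve with canonical bundle $\omega$, hyperelliptic involution $\lambda$ and Weierstrass points $w_1,\dots,w_6$, embedded in $\mathbb{P}^4_\omega=\mathbb{P}(H^0(C,\omega^3)^* )$ by $|\omega^3|$. $\lambda$ is linearized on $\omega$ acting as the identity on fibres over Weierstrass points; $H^0(C,\omega^3)_\pm$ are the eigenspaces (dimensions 4 and 1), and $\mathbb{P}^3_{\omega+}=\mathbb{P}(H^0(C,\omega^3)_+^* )\subset\mathbb{P}^4_\omega$ is the hyperplane annihilating $H^0(C,\omega^3)_-$; one has $C\cap\mathbb{P}^3_{\omega+}=\{w_1,\dots,w_6\}$. $Sec(C)$ is the secant variety of $C\subset\mathbb{P}^4_\omega$. *)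

(* Defs.v *)
From HB Require Import structures.
From mathcomp Require Import all_boot all_order all_algebra.
From mathcomp Require Import mpoly.
Set Implicit Arguments. Unset Strict Implicit. Unset Printing Implicit Defensive.
Import Order.TTheory GRing.Theory Num.Theory.
Local Open Scope ring_scope.

(* Concrete model: C : y^2 = f(x) = \prod_{i<6} (x - a_i), a_i distinct.
   P^4_omega has homogeneous coordinates dual to the basis
   s_j = x^j (dx/y)^3 (j = 0..3), s_4 = y (dx/y)^3 of H^0(C, omega^3).
   Points of P^4 are represented by nonzero vectors of K^5 (row vectors);
   subsets of P^4 by cones in K^5. *)

Definition sextic (K : numClosedFieldType) (a : 'I_6 -> K) : {poly K} :=
  \prod_(i < 6) ('X - (a i)%:P).

Definition affpt (K : numClosedFieldType) (x y : K) : 'rV[K]_5 :=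
  \row_(j < 5) [:: 1; x; x ^+ 2; x ^+ 3; y]`_j.

(* images of the two points at infinity (y/x^3 -> s, s = 1 or -1) *)
Definition infpt (K : numClosedFieldType) (s : K) : 'rV[K]_5 :=
  \row_(j < 5) [:: 0; 0; 0; 1; s]`_j.

Definition curve_vec (K : numClosedFieldType) (a : 'I_6 -> K) (v : 'rV[K]_5) : Prop :=
  (exists x y : K, y ^+ 2 = (sextic a).[x] /\ v = affpt x y)
  \/ v = infpt 1 \/ v = infpt (-1).

Definition secant_cone (K : numClosedFieldType) (a : 'I_6 -> K) (z : 'rV[K]_5) : Prop :=
  exists p q : 'rV[K]_5, exists s t : K,
    [/\ curve_vec a p, curve_vec a q, p != q & z = s *: p + t *: q].

Definition zclosure (K : numClosedFieldType) (S : 'rV[K]_5 -> Prop) (z : 'rV[K]_5) : Prop :=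
  forall P : {mpoly K[5]},
    (forall w, S w -> P.@[fun i => w ord0 i] = 0) -> P.@[fun i => z ord0 i] = 0.

Definition Sec (K : numClosedFieldType) (a : 'I_6 -> K) : 'rV[K]_5 -> Prop :=
  zclosure (secant_cone a).

Definition Pplus (K : numClosedFieldType) (z : 'rV[K]_5) : Prop := z ord0 4%:R = 0.

Definition Wprime (K : numClosedFieldType) (a : 'I_6 -> K) (z : 'rV[K]_5) : Prop :=
  Sec a z /\ Pplus z.

Definition wpt (K : numClosedFieldType) (a : 'I_6 -> K) (i : 'I_6) : 'rV[K]_5 :=
  affpt (a i) 0.

Definition wspan (K : numClosedFieldType) (a : 'I_6 -> K) (T : {set 'I_6})
    (z : 'rV[K]_5) : Prop :=
  exists c : 'I_6 -> K, z = \sum_(i in T) c i *: wpt a i.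

(* Main.v *)
Require Import Defs.
From HB Require Import structures.
From mathcomp Require Import all_boot all_order all_algebra.
From mathcomp Require Import mpoly.
From mathcomp Require Import ring.
Import Order.TTheory GRing.Theory Num.Theory.
Local Open Scope ring_scope.
Set Implicit Arguments. Unset Strict Implicit. Unset Printing Implicit Defensive.

Section S.
Variable K : numClosedFieldType.

Definition co (z : 'rV[K]_5) (k : nat) : K := z ord0 (inord k).

Definition pair (z : 'rV[K]_5) (g : {poly K}) : K :=
  co z 0 * g`_0 + co z 1 * g`_1 + co z 2 * g`_2 + co z 3 * g`_3.

Lemma horner4 (g : {poly K}) x : (size g <= 4)%N ->
  g.[x] = g`_0 + g`_1 * x + g`_2 * x ^+ 2 + g`_3 * x ^+ 3.
Proof.
move=> h; rewrite (horner_coef_wide _ h) !big_ord_recr big_ord0 /=.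
by rewrite add0r expr0 mulr1 expr1.
Qed.

Lemma co_affpt x y k : (k < 5)%N -> co (affpt x y) k = [:: 1; x; x ^+ 2; x ^+ 3; y]`_k.
Proof. by move=> hk; rewrite /co /affpt mxE inordK. Qed.

Lemma poly_all0 (p : {poly K}) : (forall x, p.[x] = 0) -> p = 0.
Proof.
move=> h; apply: (@roots_geq_poly_eq0 _ p [seq i%:R | i <- iota 0 (size p)]).
- by apply/allP => x /mapP [i _ ->]; rewrite /root h.
- rewrite map_inj_uniq ?iota_uniq // => i j /eqP; rewrite eqr_nat => /eqP //.
- by rewrite size_map size_iota.
Qed.

Lemma co4 (z : 'rV[K]_5) : co z 4 = z ord0 4%:R.
Proof. rewrite /co; f_equal; apply: val_inj; by rewrite /= inordK. Qed.

Lemma rowP5 (z w : 'rV[K]_5) : (forall k, (k < 5)%N -> co z k = co w k) -> z = w.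
Proof.
move=> h; apply/rowP => j.
have := h j (ltn_ord j); rewrite /co.
have -> : inord j = j by apply: val_inj; rewrite /= inordK.
by [].
Qed.

Lemma lemA (f1 f2 s t : K) : s ^+ 2 * f1 = t ^+ 2 * f2 ->
  exists y1 y2 : K, [/\ y1 ^+ 2 = f1, y2 ^+ 2 = f2 & s * y1 + t * y2 = 0].
Proof.
move=> h.
have [s0|s0] := eqVneq s 0.
  have [t0|t0] := eqVneq t 0.
    by exists (sqrtC f1), (sqrtC f2); split; rewrite ?sqrtCK // s0 t0 !mul0r addr0.
  move: h; rewrite s0 expr0n /= mul0r => /esym/eqP; rewrite mulf_eq0 expf_eq0 (negbTE t0) /= => /eqP f20.
  by exists (sqrtC f1), 0; split; rewrite ?sqrtCK // ?s0 ?f20 ?expr0n //= ?mul0r ?mulr0 ?addr0.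
exists (- t * sqrtC f2 / s), (sqrtC f2); split.
- have -> : f1 = t ^+ 2 * f2 / s ^+ 2 by rewrite -h; field.
  by rewrite !exprMn sqrtCK; field.
- exact: sqrtCK.
- by field.
Qed.

Definition Acoef (z : 'rV[K]_5) := co z 0 * co z 2 - co z 1 ^+ 2.
Definition Bcoef (z : 'rV[K]_5) := co z 1 * co z 2 - co z 0 * co z 3.
Definition Ccoef (z : 'rV[K]_5) := co z 1 * co z 3 - co z 2 ^+ 2.
Definition Dcoef (z : 'rV[K]_5) := Bcoef z ^+ 2 - 4%:R * Acoef z * Ccoef z.

Lemma co_lin (p q : 'rV[K]_5) s t k : co (s *: p + t *: q) k = s * co p k + t * co q k.
Proof. by rewrite /co !mxE. Qed.

Lemma lemH (a : 'I_6 -> K) (gS gT : {poly K}) :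
  (size gS <= 4)%N -> (size gT <= 4)%N -> sextic a = gS * gT ->
  forall Z : 'rV[K]_5, co Z 4 = 0 -> pair Z gS = 0 -> pair Z gT = 0 ->
  Acoef Z * Dcoef Z != 0 -> secant_cone a Z.
Proof.
move=> hS hT hf Z hZ4 pS pT.
rewrite mulf_eq0 negb_or => /andP [A0 D0].
have two0 : (2%:R : K) != 0 by rewrite pnatr_eq0.
pose z0 := co Z 0; pose z1 := co Z 1; pose z2 := co Z 2; pose z3 := co Z 3.
pose A := Acoef Z; pose B := Bcoef Z; pose C := Ccoef Z.
have hA : A = z0 * z2 - z1 ^+ 2 by [].
have hB : B = z1 * z2 - z0 * z3 by [].
have hC : C = z1 * z3 - z2 ^+ 2 by [].
pose d := sqrtC (Dcoef Z).
have hd : d ^+ 2 = B ^+ 2 - 4%:R * A * C by rewrite sqrtCK.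
have d0 : d != 0 by rewrite sqrtC_eq0.
pose x1 := (d - B) / (2%:R * A).
pose x2 := (- d - B) / (2%:R * A).
have h12 : x1 - x2 = d / A by rewrite /x1 /x2; field.
have x12 : x1 - x2 != 0 by rewrite h12 mulf_neq0 ?invr_eq0.
have hsum : x1 + x2 = - B / A by rewrite /x1 /x2; field.
have hprod : x1 * x2 = C / A.
  have -> : x1 * x2 = (B ^+ 2 - d ^+ 2) / (4%:R * A ^+ 2).
    by rewrite /x1 /x2; field.
  by rewrite hd; field.
pose s := (z1 - x2 * z0) / (x1 - x2).
pose t := (x1 * z0 - z1) / (x1 - x2).
have e0 : s + t = z0 by rewrite /s /t; field.
have e1 : s * x1 + t * x2 = z1 by rewrite /s /t; field.
have e2 : s * x1 ^+ 2 + t * x2 ^+ 2 = z2.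
  have -> : s * x1 ^+ 2 + t * x2 ^+ 2 = (x1 + x2) * (s * x1 + t * x2) - x1 * x2 * (s + t) by ring.
  rewrite e1 e0 hsum hprod hB hC; apply/(mulfI A0); rewrite hA; field; by rewrite -hA.
have e3 : s * x1 ^+ 3 + t * x2 ^+ 3 = z3.
  have -> : s * x1 ^+ 3 + t * x2 ^+ 3 = (x1 + x2) * (s * x1 ^+ 2 + t * x2 ^+ 2) - x1 * x2 * (s * x1 + t * x2) by ring.
  rewrite e2 e1 hsum hprod hB hC; apply/(mulfI A0); rewrite hA; field; by rewrite -hA.
have hpair : forall g : {poly K}, (size g <= 4)%N -> pair Z g = s * g.[x1] + t * g.[x2].
  move=> g hg; rewrite !horner4 // /pair -/z0 -/z1 -/z2 -/z3 -e0 -e1 -e2 -e3; ring.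
have hs := pS; rewrite hpair // in hs.
have ht := pT; rewrite hpair // in ht.
have hf2 : s ^+ 2 * (sextic a).[x1] = t ^+ 2 * (sextic a).[x2].
  apply/eqP; rewrite -subr_eq0 hf !hornerM.
  have -> : s ^+ 2 * (gS.[x1] * gT.[x1]) - t ^+ 2 * (gS.[x2] * gT.[x2]) =
    (s * gS.[x1] + t * gS.[x2]) * (s * gT.[x1]) - t * gS.[x2] * (s * gT.[x1] + t * gT.[x2]) by ring.
  by rewrite hs ht; apply/eqP; ring.
have [y1 [y2 [hy1 hy2 hy]]] := lemA hf2.
exists (affpt x1 y1), (affpt x2 y2), s, t; split.
- by left; exists x1, y1.
- by left; exists x2, y2.
- apply/eqP => e; have := congr1 (fun v => co v 1) e; rewrite !co_affpt //= => /eqP.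
  by rewrite -subr_eq0 (negbTE x12).
- apply: rowP5 => k hk; rewrite co_lin !co_affpt //.
  case: k hk => [|[|[|[|[|k]]]]] hk //=.
  + by rewrite !mulr1.
  + by rewrite hZ4 hy.
Qed.

Lemma co_scale c (v : 'rV[K]_5) k : co (c *: v) k = c * co v k.
Proof. by rewrite /co mxE. Qed.

Lemma pair_affpt x (g : {poly K}) : (size g <= 4)%N -> pair (affpt x 0) g = g.[x].
Proof. by move=> hg; rewrite horner4 // /pair !co_affpt //=; ring. Qed.

Lemma pair_lin (p q : 'rV[K]_5) s t g : pair (s *: p + t *: q) g = s * pair p g + t * pair q g.
Proof. by rewrite /pair !co_lin; ring. Qed.

Lemma co_span (a : 'I_6 -> K) (T : {set 'I_6}) (c : 'I_6 -> K) k :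
  co (\sum_(i in T) c i *: wpt a i) k = \sum_(i in T) c i * co (wpt a i) k.
Proof. by rewrite /co summxE; apply: eq_bigr => i _; rewrite mxE. Qed.

Lemma pair_span (a : 'I_6 -> K) (T : {set 'I_6}) (c : 'I_6 -> K) (g : {poly K}) :
  (size g <= 4)%N ->
  pair (\sum_(i in T) c i *: wpt a i) g = \sum_(i in T) c i * g.[a i].
Proof.
move=> hg; rewrite /pair !co_span !big_distrl -!big_split /=.
apply: eq_bigr => i _; rewrite -pair_affpt // /pair; ring.
Qed.

Definition gpol (a : 'I_6 -> K) (T : {set 'I_6}) : {poly K} := \prod_(i in T) ('X - (a i)%:P).

Lemma size_gpol a (T : {set 'I_6}) : size (gpol a T) = #|T|.+1.
Proof. by rewrite /gpol -big_enum size_prod_XsubC cardE. Qed.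

Lemma horner_gpol a (T : {set 'I_6}) x : (gpol a T).[x] = \prod_(i in T) (x - a i).
Proof. by rewrite /gpol horner_prod; apply: eq_bigr => i _; rewrite hornerXsubC. Qed.

Lemma gpol_root a (T : {set 'I_6}) i : i \in T -> (gpol a T).[a i] = 0.
Proof. by move=> hi; rewrite horner_gpol (bigD1 i) //= subrr mul0r. Qed.

Lemma gpol_nroot a (T : {set 'I_6}) i : injective a -> i \notin T -> (gpol a T).[a i] != 0.
Proof.
move=> ia hi; rewrite horner_gpol; apply/prodf_neq0 => j hj; rewrite subr_eq0.
apply/eqP => /ia e; move: hi; rewrite e; by rewrite hj.
Qed.

Lemma sextic_split a (T : {set 'I_6}) : sextic a = gpol a T * gpol a (~: T).
Proof.
rewrite /sextic /gpol (bigID (fun i => i \in T)) /=; congr (_ * _).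
by apply: eq_bigl => i; rewrite in_setC.
Qed.

Definition Lp (z W : 'rV[K]_5) (k : nat) : {poly K} :=
  (co z k)%:P + 'X * (co W k - co z k)%:P.

Definition Epol (z W : 'rV[K]_5) : {poly K} :=
  (Lp z W 0 * Lp z W 2 - Lp z W 1 ^+ 2) *
  ((Lp z W 1 * Lp z W 2 - Lp z W 0 * Lp z W 3) ^+ 2 -
   (4%:R)%:P * (Lp z W 0 * Lp z W 2 - Lp z W 1 ^+ 2) * (Lp z W 1 * Lp z W 3 - Lp z W 2 ^+ 2)).

Definition Zr (z W : 'rV[K]_5) (mu : K) : 'rV[K]_5 :=
  \row_j (z ord0 j + mu * (W ord0 j - z ord0 j)).

Lemma co_Zr z W mu k : co (Zr z W mu) k = co z k + mu * (co W k - co z k).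
Proof. by rewrite /co /Zr mxE. Qed.

Lemma Epol_eval (z W : 'rV[K]_5) mu : (Epol z W).[mu] = Acoef (Zr z W mu) * Dcoef (Zr z W mu).
Proof.
rewrite /Epol /Lp /Dcoef /Acoef /Bcoef /Ccoef !co_Zr.
rewrite !(hornerM, hornerD, hornerN, horner_exp, hornerC, hornerX).
ring.
Qed.

Definition Gpol (P : {mpoly K[5]}) (z W : 'rV[K]_5) : {poly K} :=
  \sum_(m <- msupp P) (P@_m)%:P *
     \prod_(i < 5) ((z ord0 i)%:P + 'X * (W ord0 i - z ord0 i)%:P) ^+ m i.

Lemma Gpol_eval P z W mu : (Gpol P z W).[mu] = P.@[fun i => Zr z W mu ord0 i].
Proof.
rewrite /Gpol mevalE horner_sum; apply: eq_bigr => m _.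
rewrite hornerM hornerC horner_prod; congr (_ * _); apply: eq_bigr => i _.
by rewrite horner_exp hornerD hornerC hornerM hornerX hornerC /Zr mxE.
Qed.
End S.

Unset Implicit Arguments.

Theorem mainTheorem12 (K : numClosedFieldType) (a : 'I_6 -> K)
    (a_inj : injective a) (S : {set 'I_6}) (hS : #|S| = 3%N)
    (z : 'rV[K]_5) :
  wspan a S z -> wspan a (~: S) z -> Wprime a z.
Proof.
move=> [c hc] [d hd].
pose gS := gpol a S; pose gT := gpol a (~: S).
have hcT : #|~: S| = 3%N.
  have := cardsC S; rewrite hS card_ord => h.
  by apply/eqP; rewrite -(eqn_add2l 3) h.
have sS : (size gS <= 4)%N by rewrite size_gpol hS.
have sT : (size gT <= 4)%N by rewrite size_gpol hcT.
have hf : sextic a = gS * gT by exact: sextic_split.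
have z4 : co z 4 = 0.
  by rewrite hc co_span big1 // => i _; rewrite co_affpt //= mulr0.
split; last by rewrite /Pplus -co4.
have pzS : pair z gS = 0.
  by rewrite hc pair_span // big1 // => i hi; rewrite gpol_root // mulr0.
have pzT : pair z gT = 0.
  by rewrite hd pair_span // big1 // => i hi; rewrite gpol_root // mulr0.
have [i [j [Si Sj ij]]] : exists i j, [/\ i \in S, j \in S & i != j].
  by apply/card_gt1P; rewrite hS.
have gTi : gT.[a i] != 0 by apply: gpol_nroot => //; rewrite in_setC Si.
have gTj : gT.[a j] != 0 by apply: gpol_nroot => //; rewrite in_setC Sj.
have aij : a i - a j != 0.
  by rewrite subr_eq0; apply: contra ij => /eqP /a_inj ->.
pose W := gT.[a j] *: wpt a i + (- gT.[a i]) *: wpt a j.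
have W4 : co W 4 = 0 by rewrite co_lin !co_affpt //= !mulr0 addr0.
have pWS : pair W gS = 0.
  have r1 : gS.[a i] = 0 := gpol_root a Si.
  have r2 : gS.[a j] = 0 := gpol_root a Sj.
  by rewrite pair_lin !pair_affpt // r1 r2 !mulr0 addr0.
have pWT : pair W gT = 0.
  by rewrite pair_lin !pair_affpt //; ring.
have WAD : Acoef W * Dcoef W != 0.
  rewrite /Dcoef /Acoef /Bcoef /Ccoef !co_lin !co_affpt //=.
  set s := gT.[a j]; set t := - gT.[a i]; set x1 := a i; set x2 := a j.
  rewrite [X in X != 0](_ : _ = (s * t * (x1 - x2) ^+ 2) ^+ 3 * (x1 - x2) ^+ 2); last by ring.
  by rewrite !mulf_neq0 ?expf_neq0 ?oppr_eq0.
move=> P hP.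
have GE0 : Gpol P z W * Epol z W = 0.
  apply: poly_all0 => mu; rewrite hornerM Epol_eval.
  have [->|E0] := eqVneq (Acoef (Zr z W mu) * Dcoef (Zr z W mu)) 0; first by rewrite mulr0.
  rewrite Gpol_eval hP ?mul0r //.
  have hpl : forall g, pair (Zr z W mu) g = pair z g + mu * (pair W g - pair z g).
    by move=> g; rewrite /pair !co_Zr; ring.
  apply: (lemH sS sT hf) => //.
  - by rewrite co_Zr z4 W4 subrr mulr0 addr0.
  - by rewrite hpl pzS pWS subrr mulr0 addr0.
  - by rewrite hpl pzT pWT subrr mulr0 addr0.
have E1 : Epol z W != 0.
  apply/eqP => e; have := congr1 (fun p => p.[1]) e; rewrite /= Epol_eval horner0.
  have -> : Zr z W 1 = W by apply: rowP5 => k _; rewrite co_Zr; ring.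
  by apply/eqP.
have G0 : Gpol P z W = 0 by move/eqP: GE0; rewrite mulf_eq0 (negbTE E1) orbF => /eqP.
have := congr1 (fun p => p.[0]) G0; rewrite /= Gpol_eval horner0.
have -> : Zr z W 0 = z by apply: rowP5 => k _; rewrite co_Zr; ring.
by [].
Qed.
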